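(* Let $G$ be a finite connected graph. For any integers $0 \le f < n$, there exists an $f$-resilient synchronous message-passing algorithm for $n$ processes that solves graphical approximate agreement on $G$ in $\lfloor f/2 \rfloor + \lceil \log_2 \mathrm{diam}(G) \rceil + 1$ rounds.
   Context: Graphical approximate agreement on $G$: each process receives an input vertex and each non-crashed process outputs a vertex such that any two outputs are equal or adjacent in $G$ and every output lies on a shortest path in $G$ between two (not necessarily distinct) inputs. $\mathrm{diam}(G)$ is the maximum distance between two vertices of $G$. Synchronous message-passing model: $n$ fully connected processes, computation in synchronous rounds; in each round every process sends its entire state to every other process and messages from non-faulty processes arrive within the round; processes may crash. An $f$-resilient solution using $T$ rounds: in every execution with at most $f$ crashes, all non-crashed processes decide valid outputs by the end of round $T$. *)

(* Defs.v *)
From mathcomp Require Import all_boot.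
Set Implicit Arguments. Unset Strict Implicit. Unset Printing Implicit Defensive.

Definition dist_le (T : finType) (e : rel T) (x y : T) (k : nat) : Prop :=
  exists p : seq T, [/\ path e x p, last x p = y & size p <= k].

Definition is_diam (T : finType) (e : rel T) (d : nat) : Prop :=
  (forall x y, dist_le e x y d) /\
  (exists x y, forall k, dist_le e x y k -> d <= k).

Definition on_shortest_path (T : finType) (e : rel T) (u v z : T) : Prop :=
  exists p : seq T,
    [/\ path e u p, last u p = v,
        (forall q : seq T, path e u q -> last u q = v -> size p <= size q)
      & z \in u :: p].

(* The local state (view) of a process in the full-information protocol:
   initially its identifier and input; after each round, its previous state
   together with, for every process j, the state received from j (None if
   no message from j arrived in that round). *)
Inductive view (n : nat) (T : Type) : Type :=
| VInit : 'I_n -> T -> view n T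
| VStep : view n T -> ('I_n -> option (view n T)) -> view n T.

(* A failure pattern: crash j = None means j never crashes; crash j = Some c
   means j crashes in round c (rounds are numbered 1, 2, ...): it sends
   normally in rounds < c, in round c its message reaches exactly the
   processes i with deliv j i, and afterwards it sends nothing. *)
Definition sends (n : nat) (crash : 'I_n -> option nat)
    (deliv : 'I_n -> 'I_n -> bool) (r : nat) (j i : 'I_n) : bool :=
  match crash j with
  | None => true
  | Some c => (r < c) || ((r == c) && deliv j i)
  end.

Fixpoint state (n : nat) (T : Type) (inp : 'I_n -> T)
    (crash : 'I_n -> option nat) (deliv : 'I_n -> 'I_n -> bool)
    (r : nat) (i : 'I_n) : view n T :=
  match r with
  | 0 => VInit i (inp i)
  | r'.+1 => VStep (state inp crash deliv r' i)
      (fun j => if sends crash deliv r'.+1 j i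
                then Some (state inp crash deliv r' j) else None)
  end.

Definition alive_after (n : nat) (crash : 'I_n -> option nat) (R : nat) (i : 'I_n) : bool :=
  match crash i with None => true | Some c => R < c end.

Definition num_crashes (n : nat) (crash : 'I_n -> option nat) : nat :=
  #|[pred j : 'I_n | crash j != None]|.

Definition solves_GAA (T : finType) (e : rel T) (n f R : nat)
    (dec : view n T -> T) : Prop :=
  forall (inp : 'I_n -> T) (crash : 'I_n -> option nat)
         (deliv : 'I_n -> 'I_n -> bool),
    num_crashes crash <= f ->
    (forall i j : 'I_n, alive_after crash R i -> alive_after crash R j ->
       let oi := dec (state inp crash deliv R i) in
       let oj := dec (state inp crash deliv R j) in
       (oi = oj) \/ e oi oj) /\
    (forall i : 'I_n, alive_after crash R i ->
       exists a b : 'I_n,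
         on_shortest_path e (inp a) (inp b) (dec (state inp crash deliv R i))).

(* Main.v *)
Require Import Defs.
From mathcomp Require Import all_boot zify.
From Stdlib Require Import Classical ClassicalEpsilon.
Set Implicit Arguments. Unset Strict Implicit. Unset Printing Implicit Defensive.

Section Mins.
Variable T : finType.
Definition key (x : T) : nat := enum_rank x.
Lemma key_inj : injective key.
Proof. by move=> x y /val_inj /enum_rank_inj. Qed.
Definition tmin (x y : T) := if key x <= key y then x else y.
Definition tmax (x y : T) := if key x <= key y then y else x.

Lemma tmin_in x0 l : foldr tmin x0 l \in x0 :: l.
Proof.
elim: l => [|a l IH] /=; first by rewrite inE.
rewrite /tmin; case: ifP => _; first by rewrite !inE eqxx orbT.
move: IH; rewrite !inE => /orP [->|->] //; by rewrite ?orbT.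
Qed.
Lemma tmin_le x0 l y : y \in x0 :: l -> key (foldr tmin x0 l) <= key y.
Proof.
elim: l y => [|a l IH] y /=; first by rewrite inE => /eqP ->.
move=> Hy; have {}IH : forall z, z \in x0 :: l -> key (foldr tmin x0 l) <= key z by [].
set F := foldr tmin x0 l in IH *; rewrite /tmin; move: Hy; rewrite !inE => /or3P [/eqP->|/eqP->|H]; case: ifP => h; first [by [] | by have := IH x0 (mem_head _ _); lia | by have := IH y; rewrite inE H orbT => /(_ isT); lia | lia].
Qed.
Lemma tmax_in x0 l : foldr tmax x0 l \in x0 :: l.
Proof.
elim: l => [|a l IH] /=; first by rewrite inE.
rewrite /tmax; case: ifP => _; last by rewrite !inE eqxx orbT.
move: IH; rewrite !inE => /orP [->|->] //; by rewrite ?orbT.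
Qed.
Lemma tmax_ge x0 l y : y \in x0 :: l -> key y <= key (foldr tmax x0 l).
Proof.
elim: l y => [|a l IH] y /=; first by rewrite inE => /eqP ->.
move=> Hy; have {}IH : forall z, z \in x0 :: l -> key z <= key (foldr tmax x0 l) by [].
set F := foldr tmax x0 l in IH *; rewrite /tmax; move: Hy; rewrite !inE => /or3P [/eqP->|/eqP->|H]; case: ifP => h; first [by [] | by have := IH x0 (mem_head _ _); lia | by have := IH y; rewrite inE H orbT => /(_ isT); lia | lia].
Qed.
End Mins.

Lemma minn_in x0 l : foldr minn x0 l \in x0 :: l.
Proof.
elim: l => [|a l IH] /=; first by rewrite inE.
rewrite /minn; case: ifP => _; first by rewrite !inE eqxx orbT.
move: IH; rewrite !inE => /orP [->|->] //; by rewrite ?orbT.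
Qed.
Lemma minn_le x0 l y : y \in x0 :: l -> foldr minn x0 l <= y.
Proof.
elim: l y => [|a l IH] y /=; first by rewrite inE => /eqP ->.
rewrite !inE => /or3P [/eqP->|/eqP->|H].
- have := IH x0; rewrite inE eqxx => /(_ isT); lia.
- lia.
- have := IH y; rewrite inE H orbT => /(_ isT); lia.
Qed.
Lemma maxn_in x0 l : foldr maxn x0 l \in x0 :: l.
Proof.
elim: l => [|a l IH] /=; first by rewrite inE.
rewrite /maxn; case: ifP => _; last by rewrite !inE eqxx orbT.
move: IH; rewrite !inE => /orP [->|->] //; by rewrite ?orbT.
Qed.
Lemma maxn_ge x0 l y : y \in x0 :: l -> y <= foldr maxn x0 l.
Proof.
elim: l y => [|a l IH] y /=; first by rewrite inE => /eqP ->.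
rewrite !inE => /or3P [/eqP->|/eqP->|H].
- have := IH x0; rewrite inE eqxx => /(_ isT); lia.
- lia.
- have := IH y; rewrite inE H orbT => /(_ isT); lia.
Qed.

Lemma half_test a b : a <= b -> (a + b)./2 <= b.
Proof. lia. Qed.

Section Model.
Variables (n : nat) (crash : 'I_n -> option nat) (deliv : 'I_n -> 'I_n -> bool).

Lemma alive_S r i : alive_after crash r.+1 i -> alive_after crash r i.
Proof. rewrite /alive_after; case: (crash i) => // c; lia. Qed.
Lemma alive_sends r j i : alive_after crash r.+1 j -> sends crash deliv r.+1 j i.
Proof. rewrite /alive_after /sends; case: (crash j) => // c ->; by []. Qed.
Lemma sends_alive r j i : sends crash deliv r.+1 j i -> alive_after crash r j.
Proof.
rewrite /alive_after /sends; case: (crash j) => // c /orP [|/andP [/eqP -> _]]; lia.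
Qed.
Lemma alive_split r j : alive_after crash r j -> crash j != Some r.+1 ->
  alive_after crash r.+1 j.
Proof.
rewrite /alive_after; case: (crash j) => // c H H'.
have : c != r.+1 by apply: contra H' => /eqP ->.
lia.
Qed.

Definition Qc (R : nat) := [pred j : 'I_n | if crash j is Some c then (0 < c) && (c <= R) else false].
Definition Cr (r : nat) := [pred j : 'I_n | crash j == Some r].

Lemma Qc_le R : #|Qc R| <= num_crashes crash.
Proof.
apply/subset_leq_card/subsetP => j; rewrite !inE; by case: (crash j).
Qed.

Lemma pigeon R : (exists2 r, r < R & #|Cr r.+1| <= 1) \/ 2 * R <= #|Qc R|.
Proof.
elim: R => [|R [IH|IH]]; first by right.
- by left; case: IH => r H1 H2; exists r => //; lia.
case: (leqP #|Cr R.+1| 1) => H; first by left; exists R.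
right.
have E1 : #|Qc R.+1| = #|Qc R| + #|Cr R.+1|.
  rewrite -cardUI.
  have -> : #|[predI Qc R & Cr R.+1]| = 0.
    apply: eq_card0 => j; rewrite !inE; case: (crash j) => // c.
    apply/negP => /andP [/andP [_ h1] /eqP [h2]]; lia.
  rewrite addn0; apply: eq_card => j; rewrite !inE; case: (crash j) => // c.
  apply/idP/idP.
  + move=> /andP [h1 h2]; case: (ltnP c R.+1) => h3.
    * by apply/orP; left; rewrite h1; lia.
    * by apply/orP; right; apply/eqP; congr Some; lia.
  + move=> /orP [/andP [h1 h2]|/eqP [->]]; first by rewrite h1; lia.
    by rewrite ltn0Sn leqnn.
rewrite E1; lia.
Qed.
End Model.

Definition St (T : Type) := (T * T * nat)%type.

Section Alg.
Variables (T : finType) (n : nat) (sp : T -> T -> seq T) (R1 : nat).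

Definition stepL (rr : nat) (own : St T) (rest : seq (St T)) : St T :=
  let A := foldr (@tmin T) own.1.1 (map (fun s : St T => s.1.1) rest) in
  if rr <= R1 then ((A, A), 0) else
  let B := foldr (@tmax T) own.1.2 (map (fun s : St T => s.1.2) rest) in
  let L' := size (sp A B) in
  let loc (s : St T) := if s.1.1 == s.1.2 then (if s.1.1 == A then 0 else L') else s.2 in
  ((A, B), (foldr minn (loc own) (map loc rest) + foldr maxn (loc own) (map loc rest))./2).

Fixpoint depth (v : view n T) : nat :=
  match v with VInit _ _ => 0 | VStep w _ => (depth w).+1 end.

Fixpoint run (v : view n T) : St T :=
  match v with
  | VInit _ x => ((x, x), 0)
  | VStep w m => stepL (depth w).+1 (run w)
       (pmap (fun j => match m j with Some w' => Some (run w') | None => None end) (enum 'I_n))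
  end.

Definition dec (v : view n T) : T :=
  let s := run v in nth s.1.1 (s.1.1 :: sp s.1.1 s.1.2) s.2.

Lemma depth_state inp crash deliv r i : depth (state inp crash deliv r i) = r.
Proof. by elim: r i => [|r IH] i //=; rewrite IH. Qed.

Definition rest inp crash deliv r (i : 'I_n) :=
  pmap (fun j => match (if sends crash deliv r.+1 j i then Some (state inp crash deliv r j) else None)
                 with Some w' => Some (run w') | None => None end) (enum 'I_n).

Lemma run_state inp crash deliv r i :
  run (state inp crash deliv r.+1 i) =
  stepL r.+1 (run (state inp crash deliv r i)) (rest inp crash deliv r i).
Proof. by rewrite /= depth_state. Qed.

Lemma mem_rest inp crash deliv r i s :
  s \in rest inp crash deliv r i <->
  exists j, sends crash deliv r.+1 j i /\ s = run (state inp crash deliv r j).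
Proof.
rewrite /rest mem_pmap; split.
- move=> /mapP [j _]; case: ifP => // h [->]; by exists j.
- move=> [j [h ->]]; apply/mapP; exists j; first by rewrite mem_enum.
  by rewrite h.
Qed.

Lemma step1 rr own rs : rr <= R1 ->
  exists2 s, s \in own :: rs &
    stepL rr own rs = ((s.1.1, s.1.1), 0) /\
    forall s', s' \in own :: rs -> key s.1.1 <= key s'.1.1.
Proof.
move=> H; rewrite /stepL H.
set A := foldr _ _ _.
have : A \in map (fun s : St T => s.1.1) (own :: rs) by apply: tmin_in.
move=> /mapP [s Hs EA]; exists s => //; split; first by rewrite EA.
move=> s' Hs'; rewrite -EA; apply: tmin_le.
by have := map_f (fun s : St T => s.1.1) Hs'.
Qed.

Definition okS (u v : T) (s : St T) : bool :=
  [|| s == ((u, u), 0), s == ((v, v), 0) |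
  [&& u != v, s.1.1 == u, s.1.2 == v & s.2 <= size (sp u v)]].

Definition gpos (u v : T) (s : St T) : nat :=
  if s.1.1 == s.1.2 then (if s.1.1 == u then 0 else size (sp u v)) else s.2.

Lemma okS_fst u v s : okS u v s -> s.1.1 \in [:: u; v].
Proof.
rewrite /okS !inE => /or3P [/eqP->|/eqP->|/and4P [_ /eqP -> _ _]]; by rewrite ?eqxx ?orbT.
Qed.
Lemma okS_snd u v s : okS u v s -> s.1.2 \in [:: u; v].
Proof.
rewrite /okS !inE => /or3P [/eqP->|/eqP->|/and4P [_ _ /eqP -> _]]; by rewrite ?eqxx ?orbT.
Qed.
Lemma okS_gpos u v s : okS u v s -> gpos u v s <= size (sp u v).
Proof.
rewrite /okS /gpos => /or3P [/eqP->|/eqP->|/and4P [/negPf h /eqP e1 /eqP e2 h3]] /=.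
- by rewrite eqxx.
- by rewrite eqxx; case: ifP.
- by rewrite e1 e2 h.
Qed.

Lemma okS_two u v s s' : okS u v s -> okS u v s' -> s != s' ->
  [&& u != v, u \in [:: s.1.1; s'.1.1] & v \in [:: s.1.2; s'.1.2]].
Proof.
rewrite /okS !inE.
move=> /or3P [/eqP->|/eqP->|/and4P [h /eqP e1 /eqP e2 _]];
move=> /or3P [/eqP->|/eqP->|/and4P [h' /eqP e1' /eqP e2' _]] /=;
rewrite ?e1 ?e2 ?e1' ?e2' ?h ?h' /=; move=> H; rewrite ?eqxx ?orbT ?andbT //=;
try (apply/negP => /eqP E; move: H; by rewrite E eqxx).
all: by move: H; rewrite eqxx.
Qed.

End Alg.

Lemma fold_min_const (S : eqType) (f : S -> nat) x l : (forall s, s \in l -> s = x) ->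
  foldr minn (f x) (map f l) = f x.
Proof.
move=> H; have := minn_in (f x) (map f l); rewrite inE => /orP [/eqP //|/mapP [s Hs ->]].
by rewrite (H s Hs).
Qed.
Lemma fold_max_const (S : eqType) (f : S -> nat) x l : (forall s, s \in l -> s = x) ->
  foldr maxn (f x) (map f l) = f x.
Proof.
move=> H; have := maxn_in (f x) (map f l); rewrite inE => /orP [/eqP //|/mapP [s Hs ->]].
by rewrite (H s Hs).
Qed.

Lemma step2 (T : finType) (sp : T -> T -> seq T) R1 u v rr own rs : R1 < rr -> key u <= key v ->
  (forall s, s \in own :: rs -> okS sp u v s) ->
  okS sp u v (stepL sp R1 rr own rs) /\
  exists s1 s2, [/\ s1 \in own :: rs, s2 \in own :: rs,
     gpos sp u v (stepL sp R1 rr own rs) = (gpos sp u v s1 + gpos sp u v s2)./2 &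
     forall s, s \in own :: rs -> gpos sp u v s1 <= gpos sp u v s /\ gpos sp u v s <= gpos sp u v s2].
Proof.
move=> Hr Hk Hok; have Hown := Hok own (mem_head _ _).
rewrite /stepL leqNgt Hr /=.
set A := foldr (@tmin T) _ _.
set B := foldr (@tmax T) _ _.
case: (boolP (all (pred1 own) rs)) => [/allP Hall | /allPn [s Hs Hne]].
  have HA : A = own.1.1.
    have := tmin_in own.1.1 (map (fun s : St T => s.1.1) rs).
    rewrite -/A inE => /orP [/eqP //| /mapP [s Hs ->]]; by rewrite (eqP (Hall s Hs)).
  have HB : B = own.1.2.
    have := tmax_in own.1.2 (map (fun s : St T => s.1.2) rs).
    rewrite -/B inE => /orP [/eqP //| /mapP [s Hs ->]]; by rewrite (eqP (Hall s Hs)).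
  set loc := fun s0 : St T => if s0.1.1 == s0.1.2 then (if s0.1.1 == A then 0 else size (sp A B)) else s0.2.
  have Hall' : forall s, s \in rs -> s = own by move=> s /Hall /eqP.
  rewrite (fold_min_const loc Hall') (fold_max_const loc Hall').
  have -> : (A, B, (loc own + loc own)./2) = own.
    rewrite /loc HA HB; move: Hown; rewrite /okS.
    case: own {Hall Hall' HA HB A B loc Hok} => [[a b] t] /=.
    move=> /or3P [/eqP [-> -> ->]|/eqP [-> -> ->]|/and4P [h /eqP -> /eqP -> _]].
    - by rewrite eqxx.
    - by rewrite eqxx.
    - rewrite (negPf h); congr (_, _); lia.
  split => //; exists own, own; split; rewrite ?mem_head //; first lia.
  by move=> s; rewrite inE => /orP [/eqP ->|/Hall'->].
have Hs' : s \in own :: rs by rewrite inE Hs orbT.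
have /and3P [Huv Hu Hv] : [&& u != v, u \in [:: own.1.1; s.1.1] & v \in [:: own.1.2; s.1.2]].
  apply: okS_two; [exact: Hown | exact: Hok | by rewrite eq_sym; exact: Hne].
have Hu' : u \in own.1.1 :: map (fun s : St T => s.1.1) rs.
  move: Hu; rewrite !inE => /orP [->//|/eqP ->]; by rewrite (map_f (fun s : St T => s.1.1) Hs) orbT.
have Hv' : v \in own.1.2 :: map (fun s : St T => s.1.2) rs.
  move: Hv; rewrite !inE => /orP [->//|/eqP ->]; by rewrite (map_f (fun s : St T => s.1.2) Hs) orbT.
have HA : A = u.
  have := tmin_le Hu'; rewrite -/A.
  have := tmin_in own.1.1 (map (fun s : St T => s.1.1) rs); rewrite -/A.
  move=> HAin.
  have : A \in [:: u; v].
    move: HAin; rewrite inE => /orP [/eqP ->|/mapP [t Ht ->]]; apply: okS_fst; first exact: Hown.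
    by apply: Hok; rewrite inE Ht orbT.
  rewrite !inE => /orP [/eqP //|/eqP ->] h.
  have /key_inj E : key u = key v by lia.
  by rewrite E eqxx in Huv.
have HB : B = v.
  have := tmax_ge Hv'; rewrite -/B.
  have := tmax_in own.1.2 (map (fun s : St T => s.1.2) rs); rewrite -/B.
  move=> HBin.
  have : B \in [:: u; v].
    move: HBin; rewrite inE => /orP [/eqP ->|/mapP [t Ht ->]]; apply: okS_snd; first exact: Hown.
    by apply: Hok; rewrite inE Ht orbT.
  rewrite !inE => /orP [/eqP ->|/eqP //] h.
  have /key_inj E : key u = key v by lia.
  by rewrite E eqxx in Huv.
rewrite HA HB.
set g := gpos sp u v.
change (okS sp u v (u, v, (foldr minn (g own) (map g rs) + foldr maxn (g own) (map g rs))./2) /\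
  (exists s1 s2 : St T, [/\ s1 \in own :: rs, s2 \in own :: rs,
         g (u, v, (foldr minn (g own) (map g rs) + foldr maxn (g own) (map g rs))./2) =
         (g s1 + g s2)./2
       & forall s0 : St T, s0 \in own :: rs -> g s1 <= g s0 /\ g s0 <= g s2])).
have Hmin := minn_in (g own) (map g rs).
have Hmax := maxn_in (g own) (map g rs).
have Hle : forall t, t \in own :: rs -> foldr minn (g own) (map g rs) <= g t /\ g t <= foldr maxn (g own) (map g rs).
  move=> t Ht; have Hgt : g t \in g own :: map g rs by have := map_f g Ht.
  by split; [apply: minn_le | apply: maxn_ge].
have Hbound : foldr maxn (g own) (map g rs) <= size (sp u v).
  move: Hmax; rewrite inE => /orP [/eqP ->|/mapP [t Ht ->]]; apply: okS_gpos => //.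
  by apply: Hok; rewrite inE Ht orbT.
have Hmm : foldr minn (g own) (map g rs) <= foldr maxn (g own) (map g rs).
  by have [h1 h2] := Hle own (mem_head _ _); lia.
have Hg : g (u, v, (foldr minn (g own) (map g rs) + foldr maxn (g own) (map g rs))./2) =
   (foldr minn (g own) (map g rs) + foldr maxn (g own) (map g rs))./2.
  by rewrite /g /gpos /= (negPf Huv).
split.
  apply/or3P; apply: Or33; rewrite /= Huv !eqxx /=; lia.
move: Hmin Hmax; rewrite -[g own :: map g rs]/(map g (own :: rs)).
move=> /mapP [s1 Hs1 E1] /mapP [s2 Hs2 E2].
exists s1, s2; split => //; first by rewrite Hg E1 E2.
by move=> t /Hle; rewrite E1 E2.
Qed.


Section Main.
Variables (T : finType) (sp : T -> T -> seq T) (R1 n : nat) (inp : 'I_n -> T)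
  (crash : 'I_n -> option nat) (deliv : 'I_n -> 'I_n -> bool).

Let S r i := run sp R1 (state inp crash deliv r i).
Let Lt r i := S r i :: rest sp R1 inp crash deliv r i.

Lemma S_step r i : S r.+1 i = stepL sp R1 r.+1 (S r i) (rest sp R1 inp crash deliv r i).
Proof. exact: run_state. Qed.

Lemma mem_Lt r i s : s \in Lt r i -> exists j, (j = i \/ sends crash deliv r.+1 j i) /\ s = S r j.
Proof.
rewrite inE => /orP [/eqP ->|/mem_rest [j [h ->]]]; first by exists i; split; [left|].
by exists j; split; [right|].
Qed.

Lemma Lt_alive r i s : alive_after crash r.+1 i -> s \in Lt r i ->
  exists j, alive_after crash r j /\ s = S r j.
Proof.
move=> Hi /mem_Lt [j [Hj ->]]; exists j; split => //.
case: Hj => [->|h]; [exact: alive_S Hi | exact: sends_alive h].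
Qed.

Lemma sends_Lt r j i : sends crash deliv r.+1 j i -> S r j \in Lt r i.
Proof. move=> h; rewrite inE; apply/orP; right; apply/mem_rest; by exists j. Qed.

Lemma shape1 r i : r <= R1 -> exists k, S r i = ((inp k, inp k), 0).
Proof.
elim: r i => [|r IH] i Hr; first by exists i.
rewrite S_step; have [s Hs [-> _]] := step1 sp (S r i) (rest sp R1 inp crash deliv r i) Hr.
have [j [_ ->]] := mem_Lt Hs.
have [k ->] := IH j (ltnW Hr); by exists k.
Qed.

Definition bit r (i : 'I_n) := [exists j, (crash j == Some r.+1) && sends crash deliv r.+1 j i].

Lemma incl r i k s : #|Cr crash r.+1| <= 1 -> bit r i = bit r k ->
  alive_after crash r.+1 i -> alive_after crash r.+1 k -> s \in Lt r i -> s \in Lt r k.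
Proof.
move=> Hc Hb Hi Hk /mem_Lt [j [Hj ->]]; apply: sends_Lt.
case: Hj => [->|h]; first exact: alive_sends.
have Hj := sends_alive h.
case: (boolP (crash j == Some r.+1)) => Hcj; last by apply: alive_sends; apply: alive_split.
have : bit r i by apply/existsP; exists j; rewrite Hcj h.
rewrite Hb => /existsP [j' /andP [Hcj' h']].
have Hjin : j \in Cr crash r.+1 by rewrite inE.
have Hj'in : j' \in Cr crash r.+1 by rewrite inE.
have := (card_le1P Hc) j Hjin j'; rewrite Hj'in inE => /esym /eqP <-.
exact: h'.
Qed.

Lemma same_bit r i k : r < R1 -> #|Cr crash r.+1| <= 1 -> bit r i = bit r k ->
  alive_after crash r.+1 i -> alive_after crash r.+1 k -> S r.+1 i = S r.+1 k.
Proof.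
move=> Hr Hc Hb Hi Hk; rewrite !S_step.
have [s Hs [-> Hs']] := step1 sp (S r i) (rest sp R1 inp crash deliv r i) Hr.
have [t Ht [-> Ht']] := step1 sp (S r k) (rest sp R1 inp crash deliv r k) Hr.
have h1 := Ht' s (incl Hc Hb Hi Hk Hs).
have h2 := Hs' t (incl Hc (esym Hb) Hk Hi Ht).
have /key_inj -> : key s.1.1 = key t.1.1 by lia.
by [].
Qed.


Lemma two_values r (i0 : 'I_n) : r < R1 -> #|Cr crash r.+1| <= 1 ->
  exists x y, [/\ (exists k, x = inp k), (exists k, y = inp k) &
    forall i, alive_after crash r.+1 i -> (S r.+1 i).1.1 \in [:: x; y]].
Proof.
move=> Hr Hc.
have [x Hx Hxb] : exists2 x, (exists k, x = inp k) &
    forall i, alive_after crash r.+1 i -> ~~ bit r i -> (S r.+1 i).1.1 = x.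
  case: (pickP (fun i => alive_after crash r.+1 i && ~~ bit r i)) => [i1 /andP [H1 H2]|H].
  - exists (S r.+1 i1).1.1; first by have [k ->] := shape1 i1 Hr; exists k.
    move=> i Hi Hb; rewrite (same_bit Hr Hc _ Hi H1) //.
    by rewrite (negPf Hb) (negPf H2).
  - exists (inp i0); first by exists i0.
    by move=> i Hi Hb; have := H i; rewrite Hi Hb.
have [y Hy Hyb] : exists2 y, (exists k, y = inp k) &
    forall i, alive_after crash r.+1 i -> bit r i -> (S r.+1 i).1.1 = y.
  case: (pickP (fun i => alive_after crash r.+1 i && bit r i)) => [i1 /andP [H1 H2]|H].
  - exists (S r.+1 i1).1.1; first by have [k ->] := shape1 i1 Hr; exists k.
    move=> i Hi Hb; rewrite (same_bit Hr Hc _ Hi H1) //.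
    by rewrite Hb H2.
  - exists (inp i0); first by exists i0.
    by move=> i Hi Hb; have := H i; rewrite Hi Hb.
exists x, y; split => // i Hi; case: (boolP (bit r i)) => Hb.
- by rewrite (Hyb i Hi Hb) !inE eqxx orbT.
- by rewrite (Hxb i Hi Hb) !inE eqxx.
Qed.

Lemma propagate r (x y : T) : r < R1 ->
  (forall j, alive_after crash r j -> (S r j).1.1 \in [:: x; y]) ->
  forall i, alive_after crash r.+1 i -> (S r.+1 i).1.1 \in [:: x; y].
Proof.
move=> Hr H i Hi; rewrite S_step.
have [s Hs [-> _]] := step1 sp (S r i) (rest sp R1 inp crash deliv r i) Hr.
have [j [Hj ->]] := Lt_alive Hi Hs.
exact: H.
Qed.

Lemma to_R1 r (x y : T) : r <= R1 ->
  (forall j, alive_after crash r j -> (S r j).1.1 \in [:: x; y]) ->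
  forall i, alive_after crash R1 i -> (S R1 i).1.1 \in [:: x; y].
Proof.
move=> Hr H.
suff : forall m, r + m <= R1 -> forall i, alive_after crash (r + m) i -> (S (r + m) i).1.1 \in [:: x; y].
  by move=> /(_ (R1 - r)); rewrite subnKC //; apply.
elim=> [|m IH]; first by rewrite addn0.
rewrite addnS => Hm; apply: propagate => //.
by apply: IH; lia.
Qed.

Definition hf (w : nat) := (w + 1)./2.

Lemma phase2 u v : key u <= key v ->
  (forall i, alive_after crash R1 i -> okS sp u v (S R1 i)) ->
  forall k, (forall i, alive_after crash (R1 + k) i -> okS sp u v (S (R1 + k) i)) /\
    (forall i j, alive_after crash (R1 + k) i -> alive_after crash (R1 + k) j ->
       gpos sp u v (S (R1 + k) i) <= gpos sp u v (S (R1 + k) j) + iter k hf (size (sp u v))).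
Proof.
move=> Hk H0; elim=> [|k [IH1 IH2]].
  rewrite addn0; split => // i j Hi Hj /=.
  have := okS_gpos (H0 i Hi); lia.
have Hr : R1 < (R1 + k).+1 by lia.
have Hok : forall i, alive_after crash (R1 + k).+1 i ->
    forall s, s \in Lt (R1 + k) i -> okS sp u v s.
  move=> i Hi s Hs; have [j [Hj ->]] := Lt_alive Hi Hs; exact: IH1.
rewrite addnS; split.
  move=> i Hi; rewrite S_step.
  by have [] := step2 Hr Hk (Hok i Hi).
move=> i j Hi Hj; rewrite !S_step iterS.
have [_ [s1 [s2 [Hs1 Hs2 Ei Bi]]]] := step2 Hr Hk (Hok i Hi).
have [_ [t1 [t2 [Ht1 Ht2 Ej Bj]]]] := step2 Hr Hk (Hok j Hj).
rewrite Ei Ej.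
have Hci : S (R1 + k) i \in Lt (R1 + k) i by rewrite mem_head.
have Hcj : S (R1 + k) i \in Lt (R1 + k) j by apply: sends_Lt; apply: alive_sends.
have [h1 _] := Bi _ Hci.
have [_ h2] := Bj _ Hcj.
have [j2 [Hj2 E2]] := Lt_alive Hi Hs2.
have [j1 [Hj1 E1]] := Lt_alive Hj Ht1.
have h3 := IH2 j2 j1 Hj2 Hj1; rewrite -E2 -E1 in h3.
move: h1 h2 h3; set W := iter k hf _; rewrite /hf; lia.
Qed.

End Main.

Lemma iter_hf k w : w <= 2 ^ k -> iter k hf w <= 1.
Proof.
elim: k w => [|k IH] w Hw; first by rewrite expn0 in Hw.
rewrite iterSr; apply: IH; rewrite /hf; rewrite expnS in Hw; lia.
Qed.

Definition outS (T : finType) (sp : T -> T -> seq T) (s : St T) :=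
  nth s.1.1 (s.1.1 :: sp s.1.1 s.1.2) s.2.

Lemma out_gpos (T : finType) (sp : T -> T -> seq T) u v s : okS sp u v s ->
  last u (sp u v) = v -> outS sp s = nth u (u :: sp u v) (gpos sp u v s).
Proof.
rewrite /okS /outS /gpos => /or3P [/eqP->|/eqP->|/and4P [h /eqP e1 /eqP e2 _]] Hl /=.
- by rewrite eqxx.
- rewrite eqxx; case: eqP => [->//|_].
  by rewrite -(last_nth u u) Hl.
- by rewrite e1 e2 (negPf h).
Qed.

Lemma adj (T : finType) (e : rel T) (e_sym : symmetric e) (p : seq T) u g1 g2 :
  path e u p -> g1 <= size p -> g2 <= size p -> g1 <= g2 + 1 -> g2 <= g1 + 1 ->
  nth u (u :: p) g1 = nth u (u :: p) g2 \/ e (nth u (u :: p) g1) (nth u (u :: p) g2).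
Proof.
move=> /(pathP u) Hp H1 H2 H3 H4.
case: (ltngtP g1 g2) => h.
- right; have -> : g2 = g1.+1 by lia.
  by apply: Hp; lia.
- right; have -> : g1 = g2.+1 by lia.
  by rewrite e_sym; apply: Hp; lia.
- by left; rewrite h.
Qed.

Unset Implicit Arguments.

Theorem mainTheorem8 (T : finType) (e : rel T)
    (e_sym : symmetric e) (e_irr : irreflexive e)
    (e_conn : forall x y : T, connect e x y)
    (d : nat) (hd : is_diam e d) (n f : nat) (hfn : f < n) :
  exists dec : view n T -> T,
    solves_GAA e f (f./2 + up_log 2 d + 1) dec.
Proof.
have Hex : forall a b : T, exists p : seq T, [/\ path e a p, last a p = b &
    forall q, path e a q -> last a q = b -> size p <= size q].
  move=> a b; have /connectP [p0 Hp0 Hl0] := e_conn a b.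
  suff : forall N p, size p <= N -> path e a p -> last a p = b ->
      exists p', [/\ path e a p', last a p' = b &
        forall q, path e a q -> last a q = b -> size p' <= size q].
    by move=> /(_ (size p0) p0 (leqnn _) Hp0 (esym Hl0)).
  elim=> [|N IH] p Hs Hp Hl.
  - by exists p; split => // q _ _; lia.
  - case: (classic (forall q, path e a q -> last a q = b -> size p <= size q)) => H.
    + by exists p.
    + have [q Hq] := not_all_ex_not _ _ H.
      have [Hq1 Hq'] := imply_to_and _ _ Hq.
      have [Hq2 Hq3] := imply_to_and _ _ Hq'.
      apply: (IH q) => //; lia.
pose sp := fun a b => proj1_sig (constructive_indefinite_description _ (Hex a b)).
have Hsp : forall a b, [/\ path e a (sp a b), last a (sp a b) = b &
    forall q, path e a q -> last a q = b -> size (sp a b) <= size q].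
  by move=> a b; exact: (proj2_sig (constructive_indefinite_description _ (Hex a b))).
exists (dec sp (f./2 + 1)).
move=> inp crash deliv Hf.
pose i0 : 'I_n := Ordinal (leq_ltn_trans (leq0n f) hfn).
set R1 := f./2 + 1.
have -> : f./2 + up_log 2 d + 1 = R1 + up_log 2 d by rewrite /R1 addnAC.
have [r0 Hr0 Hc] : exists2 r, r < R1 & #|Cr crash r.+1| <= 1.
  case: (pigeon crash R1) => // H; have := Qc_le crash R1; rewrite /R1 in H *; lia.
have [x [y [Hx Hy Hxy]]] := two_values sp inp deliv i0 Hr0 Hc.
have HR1 := to_R1 Hr0 Hxy.
have [u [v [Hu Hv Huv Hall]]] : exists u v, [/\ (exists k, u = inp k), (exists k, v = inp k),
    key u <= key v & forall i, alive_after crash R1 i ->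
      (run sp R1 (state inp crash deliv R1 i)).1.1 \in [:: u; v]].
  case: (leqP (key x) (key y)) => h.
  - by exists x, y; split.
  - exists y, x; split => //; first lia.
    by move=> i /HR1; rewrite !inE orbC.
have Hbase : forall i, alive_after crash R1 i -> okS sp u v (run sp R1 (state inp crash deliv R1 i)).
  move=> i Hi; have := Hall i Hi.
  have [k ->] := shape1 sp inp crash deliv i (leqnn R1).
  rewrite /okS !inE /= => /orP [/eqP ->|/eqP ->].
  - by apply/or3P; constructor 1; apply/eqP.
  - by apply/or3P; constructor 2; apply/eqP.
have [Hok Hpair] := phase2 Huv Hbase (up_log 2 d).
have [Hp Hl Hs] := Hsp u v.
have HL : size (sp u v) <= d.
  have [p [Hp1 Hp2 Hp3]] := hd.1 u v.
  have := Hs p Hp1 Hp2; lia.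
have HW : iter (up_log 2 d) hf (size (sp u v)) <= 1.
  apply: iter_hf; apply: (leq_trans HL); exact: up_logP.
have Hdec : forall w, dec sp R1 w = outS sp (run sp R1 w) by [].
split.
- move=> i j Hi Hj /=; rewrite !Hdec.
  rewrite (out_gpos (Hok i Hi) Hl) (out_gpos (Hok j Hj) Hl).
  apply: adj => //.
  + exact: okS_gpos (Hok i Hi).
  + exact: okS_gpos (Hok j Hj).
  + by have := Hpair i j Hi Hj; lia.
  + by have := Hpair j i Hj Hi; lia.
- move=> i Hi; case: Hu => a Ea; case: Hv => b Eb.
  exists a, b; rewrite -Ea -Eb Hdec.
  exists (sp u v); split => //.
  rewrite (out_gpos (Hok i Hi) Hl); apply: mem_nth => /=.
  by have := okS_gpos (Hok i Hi); lia.
Qed.
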